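(* Let $\sigma\in S_6$ and let $B:\Delta_0\to\Delta_0$ be a projective linear automorphism of the line $\Delta_0$ such that $B(\mathfrak p_i)=\mathfrak p_{\sigma(i)}$ for $1\le i\le6$. Then there exists a unique $A\in\mathrm{GL}_0(\mathcal S)$ with $A|_{\Delta_0}=B$.
   Context: Work over an algebraically closed field of characteristic $\neq2$. $F(X)=\sum_{i=0}^6f_iX^i$, $f_6\neq0$, distinct roots $\theta_1,\dots,\theta_6$. $P_j(X)=\prod_{i\ne j}(X-\theta_i)$, $\omega_j=P_j(\theta_j)$. Points of $\mathbb P^5$ are identified with $P(X)=\sum_{j=0}^5p_jX^j$; $\pi_j=P(\theta_j)/\omega_j$. $\mathcal S\subset\mathbb P^5$ is defined by $\sum_j\theta_j^i\omega_j\pi_j^2=0$, $i=0,1,2$. $\Delta_0=\{(p_0:p_1:0:0:0:0)\}\subset\mathcal S$ and $\mathfrak p_i=(-\theta_i:1:0:0:0:0)\in\Delta_0$ (the polynomial $X-\theta_i$). $\mathrm{GL}(\mathcal S)$ is the group of automorphisms of $\mathcal S$ which are restrictions of projective linear transformations of $\mathbb P^5$, and $\mathrm{GL}_0(\mathcal S)=\{A\in\mathrm{GL}(\mathcal S):A(\Delta_0)=\Delta_0\}$. *)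

(* Defs.v *)
From HB Require Import structures.
From mathcomp Require Import all_boot all_order all_algebra all_fingroup.
Set Implicit Arguments. Unset Strict Implicit. Unset Printing Implicit Defensive.
Import Order.TTheory GRing.Theory.
Local Open Scope ring_scope.

Section Defs.
Variable K : fieldType.
Variable theta : 'I_6 -> K.

(* Points of P^5 = nonzero row vectors (p_0,...,p_5) up to nonzero scalars;
   the vector v stands for the polynomial P(X) = \sum_j v_j X^j. *)
Definition proj_eq (n : nat) (u v : 'rV[K]_n) : Prop :=
  exists2 c : K, c != 0 & u = c *: v.

Definition Pval (v : 'rV[K]_6) (x : K) : K := \sum_(j < 6) v 0 j * x ^+ j.

(* omega_j = P_j(theta_j), P_j = \prod_{i <> j} (X - theta_i) *)
Definition omega (j : 'I_6) : K := \prod_(i < 6 | i != j) (theta j - theta i).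

Definition piS (v : 'rV[K]_6) (j : 'I_6) : K := Pval v (theta j) / omega j.

Definition inS (v : 'rV[K]_6) : Prop :=
  v != 0 /\
  forall i : nat, (i < 3)%N ->
    \sum_(j < 6) theta j ^+ i * omega j * piS v j ^+ 2 = 0.

Definition inDelta0 (v : 'rV[K]_6) : Prop :=
  v != 0 /\ forall j : 'I_6, (2 <= j)%N -> v 0 j = 0.

Definition embD (u : 'rV[K]_2) : 'rV[K]_6 :=
  \row_(j < 6) (if (j < 2)%N then u 0 (inord j) else 0).

(* p_i = X - theta_i, in the coordinates (p0:p1) of Delta_0 *)
Definition ptD (i : 'I_6) : 'rV[K]_2 :=
  \row_(j < 2) (if j == 0 :> nat then - theta i else 1).

(* The invertible matrix M (acting on rows, v |-> v *m M) induces an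
   element of GL(S): the projective transformation maps S onto S. *)
Definition inGL_S (M : 'M[K]_6) : Prop :=
  M \in unitmx /\
  (forall v, inS v -> inS (v *m M)) /\
  (forall w, inS w -> exists2 v, inS v & proj_eq (v *m M) w).

Definition inGL0_S (M : 'M[K]_6) : Prop :=
  inGL_S M /\
  (forall v, inDelta0 v -> inDelta0 (v *m M)) /\
  (forall w, inDelta0 w -> exists2 v, inDelta0 v & proj_eq (v *m M) w).

(* A|_{Delta_0} = B, where B is induced by the invertible 2x2 matrix N *)
Definition restricts_to (M : 'M[K]_6) (N : 'M[K]_2) : Prop :=
  forall u : 'rV[K]_2, u != 0 -> proj_eq (embD u *m M) (embD (u *m N)).

End Defs.

(* Main.v *)
Require Import Defs.
From HB Require Import structures.
From mathcomp Require Import all_boot all_order all_algebra all_fingroup.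
Import GRing.Theory.
Local Open Scope ring_scope.

From Stdlib Require Import Ring Field.

Section KRing.
Variable K : fieldType.
Definition Kadd : K -> K -> K := +%R.
Definition Kmul : K -> K -> K := *%R.
Definition Kopp : K -> K := -%R.
Definition Kinv : K -> K := GRing.inv.
Lemma Kring : @ring_theory K 0 1 Kadd Kmul (fun x y => Kadd x (Kopp y)) Kopp eq.
Proof. rewrite /Kadd /Kmul /Kopp. constructor; intros; rewrite /= ?(add0r,mul1r,mulrA,addrA,subrr) //; try (by rewrite addrC); try (by rewrite mulrC); by rewrite mulrDl. Qed.
Lemma Kfield : @field_theory K 0 1 Kadd Kmul (fun x y => Kadd x (Kopp y)) Kopp (fun x y => Kmul x (Kinv y)) Kinv eq.
Proof. constructor. exact Kring. apply/eqP; exact: oner_neq0. by []. by move=> p /eqP h; rewrite /Kmul /Kinv mulVf. Qed.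
End KRing.
Ltac knorm K :=
  rewrite ?exprS ?expr0;
  repeat match goal with
  | |- context [@Algebra.add ?i] => progress change (@Algebra.add i) with (@Kadd K)
  | |- context [@GRing.mul ?i] => progress change (@GRing.mul i) with (@Kmul K)
  | |- context [@Algebra.opp ?i] => progress change (@Algebra.opp i) with (@Kopp K)
  | |- context [@GRing.inv ?i] => progress change (@GRing.inv i) with (@Kinv K)
  | |- context [@Algebra.zero ?i] => progress change (@Algebra.zero i) with (0 : K)
  | |- context [@GRing.one ?i] => progress change (@GRing.one i) with (1 : K)
  | |- @eq ?T _ _ => progress change T with (GRing.Field.sort K)
  end.

Section Basic.
Variable K : fieldType.
Variable theta : 'I_6 -> K.
Hypothesis theta_inj : injective theta.

Lemma omega_neq0 j : omega theta j != 0.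
Proof.
apply/prodf_neq0 => i hij; rewrite subr_eq0; apply/eqP => /theta_inj h.
by rewrite h eqxx in hij.
Qed.

Definition Phi : 'M[K]_6 := \matrix_(k < 6, j < 6) (theta j ^+ k / omega theta j).

Lemma piS_Phi v j : piS theta v j = (v *m Phi) 0 j.
Proof.
rewrite /piS /Pval mxE mulr_suml; apply: eq_bigr => k _.
by rewrite mxE mulrA.
Qed.

Definition Qf (p : 'rV[K]_6) : Prop :=
  forall m : nat, (m < 3)%N ->
    \sum_(j < 6) theta j ^+ m * omega theta j * p 0 j ^+ 2 = 0.

Lemma inS_Phi v : inS theta v <-> v != 0 /\ Qf (v *m Phi).
Proof.
rewrite /inS /Qf.
have e m : \sum_(j < 6) theta j ^+ m * omega theta j * piS theta v j ^+ 2 =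
  \sum_(j < 6) theta j ^+ m * omega theta j * (v *m Phi) 0 j ^+ 2.
  by apply: eq_bigr => j _; rewrite piS_Phi.
split=> [[h1 h2]|[h1 h2]]; split=> // m hm; by [rewrite -e h2 | rewrite e h2].
Qed.

Lemma Qf_scale c p : Qf p -> Qf (c *: p).
Proof.
move=> h m hm.
have -> : \sum_(j < 6) theta j ^+ m * omega theta j * (c *: p) 0 j ^+ 2 =
  c ^+ 2 * \sum_(j < 6) theta j ^+ m * omega theta j * p 0 j ^+ 2.
  rewrite mulr_sumr; apply: eq_bigr => j _.
  by rewrite mxE exprMn mulrCA [c ^+ 2 * _]mulrC.
by rewrite h // mulr0.
Qed.

Lemma Pval_Phi_zero (v : 'rV[K]_6) : v *m Phi = 0 -> v = 0.
Proof.
move=> h.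
pose p : {poly K} := \poly_(k < 6) v 0 (inord k : 'I_6).
have hroot j : root p (theta j).
  apply/rootP; rewrite horner_poly.
  have := congr1 (fun M : 'rV[K]_6 => M 0 j * omega theta j) h.
  rewrite !mxE mul0r mulr_suml => hh; apply: (etrans _ hh); apply: eq_bigr => k _.
  by rewrite mxE inord_val -mulrA divfK ?omega_neq0.
have p0 : p = 0.
  apply/eqP; apply/negPn/negP => hp.
  have hall : all (root p) [seq theta i | i <- enum 'I_6].
    by apply/allP => x /mapP [j _ ->].
  have hu : uniq [seq theta i | i <- enum 'I_6].
    by rewrite map_inj_uniq ?enum_uniq.
  have := max_poly_roots hp hall hu.
  rewrite size_map size_enum_ord.
  have := size_poly 6 (fun k => v 0 (inord k : 'I_6)); rewrite -/p => h1 h2.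
  by have := leq_ltn_trans h1 h2; rewrite ltnn.
apply/rowP => k; rewrite mxE.
have := congr1 (fun q : {poly K} => q`_k) p0.
by rewrite coef_poly ltn_ord inord_val coef0.
Qed.

Lemma Phi_unit : Phi \in unitmx.
Proof. by rewrite -row_free_unit; apply: inj_row_free; exact: Pval_Phi_zero. Qed.


Lemma cnt5 (j : 'I_6) : count (fun i => i != j) (index_enum 'I_6) = 5%N.
Proof.
have h := cardC1 j; rewrite card_ord /= in h.
rewrite -[RHS]h cardE /enum_mem size_filter /=.
apply: eq_count => i. by rewrite !inE.
Qed.

Lemma residue k : (k <= 4)%N -> \sum_(j < 6) theta j ^+ k / omega theta j = 0.
Proof.
move=> hk.
pose Pj (j : 'I_6) : {poly K} := \prod_(i < 6 | i != j) ('X - (theta i)%:P).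
pose G := \sum_(j < 6) (theta j ^+ k / omega theta j) *: Pj j.
have sPj j : size (Pj j) = 6%N.
  by rewrite /Pj -big_filter size_prod_XsubC size_filter cnt5.
have mPj j : Pj j \is monic by apply: monic_prod_XsubC.
have hG l : G.[theta l] = theta l ^+ k.
  rewrite horner_sum (bigD1 l) //= big1 ?addr0.
    rewrite hornerZ horner_prod.
    under eq_bigr do rewrite hornerXsubC.
    by rewrite -/(omega theta l) divfK ?omega_neq0.
  move=> j hjl; rewrite hornerZ horner_prod (bigD1 l) /=; last by rewrite eq_sym.
  by rewrite hornerXsubC subrr mul0r mulr0.
have sG : (size G <= 6)%N.
  rewrite /G; apply: (leq_trans (size_sum _ _ _)).
  apply/bigmax_leqP => j _; apply: (leq_trans (size_scale_leq _ _)).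
  by rewrite sPj.
have G0 : G = 'X^k.
  apply/eqP; rewrite -subr_eq0; apply/negPn/negP => hp.
  have hall : all (root (G - 'X^k)) [seq theta i | i <- enum 'I_6].
    by apply/allP => x /mapP [j _ ->]; rewrite /root hornerD hornerN hG hornerXn subrr.
  have hu : uniq [seq theta i | i <- enum 'I_6].
    by rewrite map_inj_uniq ?enum_uniq.
  have := max_poly_roots hp hall hu.
  rewrite size_map size_enum_ord.
  have h1 : (size (G - 'X^k)%R <= 6)%N.
    have := size_polyD G (- 'X^k); rewrite size_polyN size_polyXn => hh.
    by apply: leq_trans hh _; rewrite geq_max sG /= (leq_ltn_trans hk).
  move=> h2; by have := leq_ltn_trans h1 h2; rewrite ltnn.
have := congr1 (fun q : {poly K} => q`_5) G0.
rewrite coefXn coef_sum.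
have -> : (5 == k) = false by apply/negbTE; rewrite neq_ltn ltnS hk orbT.
move=> h; transitivity (\sum_(j < 6) ((theta j ^+ k / omega theta j) *: Pj j)`_5);
  last exact: h.
apply: eq_bigr => j _; rewrite coefZ.
have : lead_coef (Pj j) = 1 by apply/monicP.
by rewrite lead_coefE sPj => ->; rewrite mulr1.
Qed.

Add Field Kf : (Kfield K).

Lemma inord0_2 : (inord 0 : 'I_2) = 0.
Proof. by apply/val_inj; rewrite /= inordK. Qed.
Lemma inord1_2 : (inord 1 : 'I_2) = 1.
Proof. by apply/val_inj; rewrite /= inordK. Qed.

Lemma embD_Phi (u : 'rV[K]_2) j :
  (embD u *m Phi) 0 j = (u 0 0 + u 0 1 * theta j) / omega theta j.
Proof.
rewrite mxE !big_ord_recl big_ord0 !mxE /= inord0_2 inord1_2 !mul0r !addr0.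
rewrite expr0 expr1 mulrDl mul1r; congr (_ + _).
by rewrite mulrA.
Qed.

Lemma term_id (a b t w : K) m : w != 0 ->
  t ^+ m * w * ((a + b * t) / w) ^+ 2 =
  a ^+ 2 * (t ^+ m / w) + (1 + 1) * a * b * (t ^+ m.+1 / w) + b ^+ 2 * (t ^+ m.+2 / w).
Proof. move=> /eqP hw. knorm K. field. exact hw. Qed.

Lemma Qf_embD u : Qf (embD u *m Phi).
Proof.
move=> m hm.
under eq_bigr do rewrite embD_Phi term_id ?omega_neq0 //.
rewrite !big_split /= -!mulr_sumr !residue; first by rewrite !mulr0 !addr0.
all: by case: m hm => [|[|[|]]].
Qed.

Lemma pick3 (j k : 'I_6) : exists c : 'I_6, (c != j) && (c != k).
Proof.
case h0: (((inord 0 : 'I_6) != j) && ((inord 0 : 'I_6) != k)); first by exists (inord 0).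
case h1: (((inord 1 : 'I_6) != j) && ((inord 1 : 'I_6) != k)); first by exists (inord 1).
exists (inord 2); move: h0 h1.
case: j k => [j hj] [k hk].
rewrite /eq_op /= /eq_op /= !inordK //.
by case: j hj => [|[|[|]]] //; case: k hk => [|[|[|]]].
Qed.

Lemma sqflip (y a : K) : (a = 0 \/ a = - ((1 + 1) * y)) -> (y + a) ^+ 2 = y ^+ 2.
Proof. by case=> ->; knorm K; ring. Qed.

Lemma xc_entry c b :
  (embD (ptD theta c) *m Phi) 0 b = (theta b - theta c) / omega theta b.
Proof. by rewrite embD_Phi !mxE /= mul1r addrC. Qed.

Lemma xc_nz c b : b != c -> (embD (ptD theta c) *m Phi) 0 b != 0.
Proof.
rewrite xc_entry => hb; apply: mulf_neq0; last by rewrite invr_eq0 omega_neq0.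
rewrite subr_eq0; apply/eqP => /theta_inj h; by rewrite h eqxx in hb.
Qed.

Lemma flip_zero (T : 'M[K]_6) (two_nz : (1 + 1 : K) != 0) :
  (forall p, p != 0 -> Qf p -> Qf (p *m T)) ->
  forall j k : 'I_6, j != k -> forall m, (m < 3)%N ->
  \sum_a theta a ^+ m * omega theta a * (T j a * T k a) = 0.
Proof.
move=> hS j k hjk m hm.
have [c /andP [hcj hck]] := pick3 j k.
set x := embD (ptD theta c) *m Phi.
have Qx : Qf x by apply: Qf_embD.
have xj : x 0 j != 0 by apply: xc_nz; rewrite eq_sym.
have xk : x 0 k != 0 by apply: xc_nz; rewrite eq_sym.
pose z a g := x + a *: delta_mx 0 j + g *: delta_mx 0 k.
have zT a g b : (z a g *m T) 0 b = (x *m T) 0 b + a * T j b + g * T k b.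
  by rewrite !mulmxDl -!scalemxAl -!rowE !mxE.
have zE a g b : z a g 0 b = x 0 b + a * (b == j)%:R + g * (b == k)%:R.
  by rewrite !mxE.
have key a g : (a = 0 \/ a = - ((1+1) * x 0 j)) -> (g = 0 \/ g = - ((1+1) * x 0 k)) ->
   \sum_b theta b ^+ m * omega theta b * ((x *m T) 0 b + a * T j b + g * T k b) ^+ 2 = 0.
  move=> ha hg.
  have sq b : z a g 0 b ^+ 2 = x 0 b ^+ 2.
    rewrite zE; case: (eqVneq b j) => [->|hbj].
      by rewrite (negbTE hjk) mulr1 mulr0 addr0 sqflip.
    rewrite mulr0 addr0; case: (eqVneq b k) => [->|hbk].
      by rewrite mulr1 sqflip.
    by rewrite mulr0 addr0.
  have Qz : Qf (z a g).
    move=> m' hm'; apply: etrans _ (Qx m' hm'); apply: eq_bigr => b _; by rewrite sq.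
  have z0 : z a g != 0.
    apply/eqP => h0; have := sq j; rewrite h0 mxE expr0n /= => /esym/eqP.
    by rewrite expf_eq0 /= (negbTE xj).
  apply: etrans _ (hS _ z0 Qz m hm); apply: eq_bigr => b _; by rewrite zT.
set a0 := - ((1+1) * x 0 j).
set g0 := - ((1+1) * x 0 k).
have e1 := key 0 0 (or_introl erefl) (or_introl erefl).
have e2 := key a0 0 (or_intror erefl) (or_introl erefl).
have e3 := key 0 g0 (or_introl erefl) (or_intror erefl).
have e4 := key a0 g0 (or_intror erefl) (or_intror erefl).
have H : (1 + 1) * a0 * g0 * \sum_a theta a ^+ m * omega theta a * (T j a * T k a) = 0.
  pose F a g := \sum_b theta b ^+ m * omega theta b * ((x *m T) 0 b + a * T j b + g * T k b) ^+ 2.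
  have -> : (1 + 1) * a0 * g0 * \sum_a theta a ^+ m * omega theta a * (T j a * T k a) =
     F 0 0 - F a0 0 - F 0 g0 + F a0 g0.
    rewrite /F -!sumrB -big_split mulr_sumr.
    apply: eq_bigr => b _; rewrite /=; knorm K; ring.
  by rewrite /F e1 e2 e3 e4 !subr0 addr0.
have a0nz : (a0 == 0) = false by rewrite /a0 oppr_eq0 mulf_eq0 (negbTE two_nz) (negbTE xj).
have g0nz : (g0 == 0) = false by rewrite /g0 oppr_eq0 mulf_eq0 (negbTE two_nz) (negbTE xk).
by move/eqP: H; rewrite !mulf_eq0 (negbTE two_nz) a0nz g0nz /= => /eqP.
Qed.

Lemma cvec0 (T : 'M[K]_6) (y : 'cV[K]_6) : T \in unitmx -> T *m y = 0 -> y = 0.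
Proof. by move=> hT h; rewrite -(mulKmx hT y) h mulmx0. Qed.

Lemma rvec0 (T : 'M[K]_6) (y : 'rV[K]_6) : T \in unitmx -> y *m T = 0 -> y = 0.
Proof. by move=> hT h; rewrite -(mulmxK hT y) h mul0mx. Qed.

Lemma row_support (T : 'M[K]_6) : T \in unitmx ->
  (forall j k : 'I_6, j != k -> forall m, (m < 3)%N ->
    \sum_a theta a ^+ m * omega theta a * (T j a * T k a) = 0) ->
  forall j a b, T j a != 0 -> T j b != 0 -> a = b.
Proof.
move=> hT hA j.
pose Z m := \sum_a theta a ^+ m * omega theta a * (T j a * T j a).
have hA' k m : (m < 3)%N -> \sum_a theta a ^+ m * omega theta a * (T k a * T j a) =
    if k == j then Z m else 0.
  move=> hm; case: eqP => [->//|/eqP hkj]; exact: hA.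
have Z0 : Z 0%N != 0.
  apply/negP => /eqP hZ.
  pose y : 'cV[K]_6 := \col_a (omega theta a * T j a).
  have : T *m y = 0.
    apply/colP => k; rewrite !mxE.
    transitivity (\sum_a theta a ^+ 0 * omega theta a * (T k a * T j a)).
      apply: eq_bigr => a _; rewrite mxE expr0 mul1r.
      by rewrite mulrCA.
    by rewrite hA' //; case: ifP => // _; rewrite hZ.
  move/(cvec0 _ _ hT) => hy.
  have : (delta_mx 0 j : 'rV[K]_6) *m T = 0.
    apply/rowP => b; rewrite -rowE !mxE.
    have := congr1 (fun M : 'cV[K]_6 => M b 0) hy; rewrite !mxE.
    by move/eqP; rewrite mulf_eq0 (negbTE (omega_neq0 _)) => /eqP.
  move/(rvec0 _ _ hT)/rowP/(_ j); rewrite !mxE !eqxx /= => /eqP.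
  by rewrite oner_eq0.
pose y : 'cV[K]_6 := \col_a ((theta a * Z 0%N - Z 1%N) * omega theta a * T j a).
have : T *m y = 0.
  apply/colP => k; rewrite !mxE.
  transitivity (Z 0%N * \sum_a theta a ^+ 1 * omega theta a * (T k a * T j a) -
                Z 1%N * \sum_a theta a ^+ 0 * omega theta a * (T k a * T j a)).
    rewrite !mulr_sumr -sumrB; apply: eq_bigr => a _; rewrite mxE.
    knorm K; ring.
  rewrite !hA' //; case: ifP => _; last by rewrite !mulr0 subrr.
  by rewrite mulrC subrr.
move/(cvec0 _ _ hT) => hy.
have ht c : T j c != 0 -> theta c = Z 1%N / Z 0%N.
  move=> hc; have := congr1 (fun M : 'cV[K]_6 => M c 0) hy; rewrite !mxE.
  move/eqP; rewrite !mulf_eq0 (negbTE hc) (negbTE (omega_neq0 _)) !orbF subr_eq0.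
  by move/eqP => <-; rewrite mulfK.
by move=> a b ha hb; apply: theta_inj; rewrite (ht _ ha) (ht _ hb).
Qed.

Lemma ptD_nz c : ptD theta c != 0.
Proof. apply/eqP => /rowP/(_ 1); rewrite !mxE /= => /eqP; by rewrite oner_eq0. Qed.

Definition u10 : 'rV[K]_2 := \row_(j < 2) (if j == 0 :> nat then 1 else 0).

Lemma u10_nz : u10 != 0.
Proof. apply/eqP => /rowP/(_ 0); rewrite !mxE /= => /eqP; by rewrite oner_eq0. Qed.

Lemma uniq_core (T : 'M[K]_6) (two_nz : (1 + 1 : K) != 0) : T \in unitmx ->
  (forall p, p != 0 -> Qf p -> Qf (p *m T)) ->
  (forall u : 'rV[K]_2, u != 0 -> proj_eq (embD u *m Phi *m T) (embD u *m Phi)) ->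
  exists2 l : K, l != 0 & T = l%:M.
Proof.
move=> hT hS hL.
have hA := flip_zero T two_nz hS.
have rs := row_support T hT hA.
have cs a j k : T j a != 0 -> T k a != 0 -> j = k.
  move=> hj hk; apply/eqP/negPn/negP => hjk.
  pose w : 'rV[K]_6 := T k a *: delta_mx 0 j - T j a *: delta_mx 0 k.
  have : w *m T = 0.
    apply/rowP => b; rewrite mulmxBl -!scalemxAl -!rowE !mxE.
    case: (eqVneq b a) => [->|hba]; first by rewrite mulrC subrr.
    have -> : T j b = 0 by apply/eqP/negPn/negP => hjb; move: hba; rewrite (rs _ _ _ hjb hj) eqxx.
    have -> : T k b = 0 by apply/eqP/negPn/negP => hkb; move: hba; rewrite (rs _ _ _ hkb hk) eqxx.
    by rewrite !mulr0 subrr.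
  move/(rvec0 _ _ hT)/rowP/(_ j); rewrite !mxE !eqxx (negbTE hjk) /= mulr1 mulr0 subr0.
  by move/eqP; rewrite (negbTE hk).
have cnz a : exists j, T j a != 0.
  case: (pickP (fun j => T j a != 0)) => [j hj|h]; first by exists j.
  have : T *m (delta_mx a 0 : 'cV[K]_6) = 0.
    apply/colP => b; rewrite -colE !mxE; by apply/eqP; move: (h b) => /negbT; rewrite negbK.
  move/(cvec0 _ _ hT)/colP/(_ a); rewrite !mxE !eqxx /= => /eqP.
  by rewrite oner_eq0.
have entry (x : 'rV[K]_6) a j : T j a != 0 -> (x *m T) 0 a = x 0 j * T j a.
  move=> hj; rewrite mxE (bigD1 j) //= big1 ?addr0 // => i hij.
  have : T i a == 0.
    by apply/negPn/negP => hi; move: hij; rewrite (cs _ _ _ hi hj) eqxx.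
  by move/eqP->; rewrite mulr0.
have diag a j : T j a != 0 -> j = a.
  move=> hj; have [l l0 hl] := hL _ (ptD_nz j).
  have := congr1 (fun M : 'rV[K]_6 => M 0 a) hl; rewrite [X in _ = X -> _]mxE.
  rewrite (entry _ _ _ hj) (xc_entry j j) subrr mul0r mul0r => /esym/eqP.
  rewrite mulf_eq0 (negbTE l0) /=; apply: contraTeq => haj.
  by apply: xc_nz; rewrite eq_sym.
have Tdiag a : T a a != 0.
  by have [j hj] := cnz a; move: (hj); rewrite (diag _ _ hj).
have Toff a j : j != a -> T j a = 0.
  move=> hja; apply/eqP/negPn/negP => hj; by move: hja; rewrite (diag _ _ hj) eqxx.
have [l l0 hl] := hL _ u10_nz.
exists l => //; apply/matrixP => i j; rewrite mxE.
case: (eqVneq i j) => [<-|hij]; last by rewrite Toff // mulr0.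
have := congr1 (fun M : 'rV[K]_6 => M 0 i) hl; rewrite [X in _ = X -> _]mxE.
rewrite (entry _ _ _ (Tdiag i)) embD_Phi !mxE /= mul0r addr0 mul1r mulr1n => h.
apply: (mulIf (invr_neq0 (omega_neq0 i))); by rewrite mulrC h.
Qed.


Variable sigma : 'S_6.
Variable N : 'M[K]_2.
Hypothesis hB : forall i : 'I_6, proj_eq (ptD theta i *m N) (ptD theta (sigma i)).

Definition cc (i : 'I_6) : K := N 1 1 - theta i * N 0 1.
Definition dN : K := N 0 0 * N 1 1 - N 0 1 * N 1 0.

Lemma rowN (u : 'rV[K]_2) k : (u *m N) 0 k = u 0 0 * N 0 k + u 0 1 * N 1 k.
Proof. rewrite mxE !big_ord_recl big_ord0 addr0. by have -> : lift ord0 ord0 = 1 :> 'I_2 by apply/val_inj. Qed.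

Lemma cc_facts i : cc i != 0 /\ theta (sigma i) * cc i = theta i * N 0 0 - N 1 0.
Proof.
have [k k0 hk] := hB i.
have h0 := congr1 (fun M : 'rV[K]_2 => M 0 0) hk.
have h1 := congr1 (fun M : 'rV[K]_2 => M 0 1) hk.
move: h0 h1; rewrite !rowN !mxE /= !mul1r !mulr1 => h0 h1.
have e1 : cc i = k by rewrite /cc -h1; knorm K; ring.
split; first by rewrite e1.
rewrite e1; move: h0; rewrite mulrN => h0.
rewrite mulrC; apply: oppr_inj; rewrite -h0; knorm K; ring.
Qed.

Lemma cc_nz i : cc i != 0. Proof. by case: (cc_facts i). Qed.
Lemma cc_rel i : theta (sigma i) * cc i = theta i * N 0 0 - N 1 0.
Proof. by case: (cc_facts i). Qed.

Lemma dN_rel i l : dN * (theta i - theta l) = cc i * cc l * (theta (sigma i) - theta (sigma l)).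
Proof.
have -> : cc i * cc l * (theta (sigma i) - theta (sigma l)) =
   cc l * (theta (sigma i) * cc i) - cc i * (theta (sigma l) * cc l) by knorm K; ring.
rewrite !cc_rel /cc /dN; knorm K; ring.
Qed.

Lemma dN_nz : dN != 0.
Proof.
apply/eqP => h.
have := dN_rel 0 1; rewrite h mul0r => /esym/eqP.
rewrite !mulf_eq0 !(negbTE (cc_nz _)) /= subr_eq0 => /eqP /theta_inj /perm_inj.
by move/(congr1 val).
Qed.

Definition Pc (i : 'I_6) : K := \prod_(l < 6 | l != i) cc l.

Lemma card_neq (i : 'I_6) : #|[pred l : 'I_6 | l != i]| = 5%N.
Proof. by have h := cardC1 i; rewrite card_ord /= in h; rewrite -[RHS]h. Qed.

Lemma omega_sigma i :
  omega theta (sigma i) * (cc i ^+ 5 * Pc i) = dN ^+ 5 * omega theta i.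
Proof.
have e5 : cc i ^+ 5 = \prod_(l < 6 | l != i) cc i.
  by rewrite prodr_const card_neq.
have d5 : dN ^+ 5 = \prod_(l < 6 | l != i) dN.
  by rewrite prodr_const card_neq.
rewrite /omega (reindex_inj (@perm_inj _ sigma)) /=.
under [X in X * _]eq_bigl do rewrite (inj_eq (@perm_inj _ sigma)).
rewrite e5 d5 /Pc -!big_split /=; apply: eq_bigr => l hl.
by rewrite dN_rel; knorm K; ring.
Qed.

Definition kap (i : 'I_6) : K := dN * omega theta i / (cc i * omega theta (sigma i)).

Lemma kap_nz i : kap i != 0.
Proof.
rewrite /kap !mulf_neq0 ?dN_nz ?omega_neq0 ?invr_neq0 ?mulf_neq0 ?cc_nz ?omega_neq0 //.
Qed.

Definition T0 : 'M[K]_6 := \matrix_(i, j) (if j == sigma i then kap i else 0).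

Lemma T0_entry (p : 'rV[K]_6) i : (p *m T0) 0 (sigma i) = p 0 i * kap i.
Proof.
rewrite mxE (bigD1 i) //= big1 ?addr0; first by rewrite mxE eqxx.
move=> l hl; rewrite mxE (inj_eq (@perm_inj _ sigma)) eq_sym (negbTE hl).
by rewrite mulr0.
Qed.

Lemma T0_unit : T0 \in unitmx.
Proof.
rewrite -row_free_unit; apply: inj_row_free => v hv.
apply/rowP => i; have := congr1 (fun M : 'rV[K]_6 => M 0 (sigma i)) hv.
rewrite T0_entry !mxE => /eqP; rewrite mulf_eq0 (negbTE (kap_nz i)) orbF.
by move/eqP.
Qed.

Lemma Pc_nz i : Pc i != 0.
Proof. by apply/prodf_neq0 => l _; apply: cc_nz. Qed.

Definition Cc : K := \prod_(l < 6) cc l.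

Lemma Cc_nz : Cc != 0.
Proof. by apply/prodf_neq0 => l _; apply: cc_nz. Qed.

Lemma Cc_split i : Cc = cc i * Pc i.
Proof. by rewrite /Cc (bigD1 i). Qed.

Definition sQ (m : nat) (p : 'rV[K]_6) : K :=
  \sum_i (omega theta i * p 0 i ^+ 2) * (theta (sigma i) ^+ m * cc i ^+ 2).

Lemma QT0 m (p : 'rV[K]_6) :
  \sum_j theta j ^+ m * omega theta j * (p *m T0) 0 j ^+ 2 = Cc / dN ^+ 3 * sQ m p.
Proof.
rewrite (reindex_inj (@perm_inj _ sigma)) /= /sQ mulr_sumr.
apply: eq_bigr => i _; rewrite T0_entry /kap.
have hW : omega theta (sigma i) = dN ^+ 5 * omega theta i / (cc i ^+ 5 * Pc i).
  rewrite -omega_sigma mulfK // mulf_neq0 ?expf_neq0 ?cc_nz ?Pc_nz //.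
rewrite hW (Cc_split i).
have h1 := dN_nz; have h2 := omega_neq0 i; have h3 := cc_nz i; have h4 := Pc_nz i.
move: h1 h2 h3 h4 => /eqP h1 /eqP h2 /eqP h3 /eqP h4.
knorm K; field; repeat split => //.
Qed.

Lemma lin3 (w f g0 g1 g2 : 'I_6 -> K) a b d :
  (forall i, f i = a * g0 i + b * g1 i + d * g2 i) ->
  \sum_i w i * f i =
  a * (\sum_i w i * g0 i) + b * (\sum_i w i * g1 i) + d * (\sum_i w i * g2 i).
Proof.
move=> h; rewrite !mulr_sumr -!big_split; apply: eq_bigr => i _; rewrite h /=.
knorm K; ring.
Qed.

Lemma qQ_form m (p : 'rV[K]_6) :
  \sum_j theta j ^+ m * omega theta j * p 0 j ^+ 2 =
  \sum_j (omega theta j * p 0 j ^+ 2) * theta j ^+ m.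
Proof. by apply: eq_bigr => j _; knorm K; ring. Qed.

Lemma Qf_sQ p : Qf p -> forall m, (m < 3)%N -> sQ m p = 0.
Proof.
move=> hp m hm.
have q k : (k < 3)%N -> \sum_j (omega theta j * p 0 j ^+ 2) * theta j ^+ k = 0.
  by move=> hk; rewrite -qQ_form; apply: hp.
rewrite /sQ.
case: m hm => [|[|[|]]] // _.
- rewrite (@lin3 _ _ (fun i => theta i ^+ 0) (fun i => theta i ^+ 1) (fun i => theta i ^+ 2)
     (N 1 1 ^+ 2) (- (1 + 1) * N 1 1 * N 0 1) (N 0 1 ^+ 2)).
    by rewrite !q // !mulr0 !addr0.
  by move=> i /=; rewrite /cc; knorm K; ring.
- rewrite (@lin3 _ _ (fun i => theta i ^+ 0) (fun i => theta i ^+ 1) (fun i => theta i ^+ 2)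
     (- N 1 0 * N 1 1) (N 0 0 * N 1 1 + N 1 0 * N 0 1) (- N 0 0 * N 0 1)).
    by rewrite !q // !mulr0 !addr0.
  move=> i /=.
  have -> : theta (sigma i) ^+ 1 * cc i ^+ 2 = (theta (sigma i) * cc i) * cc i.
    by knorm K; ring.
  by rewrite cc_rel /cc; knorm K; ring.
- rewrite (@lin3 _ _ (fun i => theta i ^+ 0) (fun i => theta i ^+ 1) (fun i => theta i ^+ 2)
     (N 1 0 ^+ 2) (- (1 + 1) * N 0 0 * N 1 0) (N 0 0 ^+ 2)).
    by rewrite !q // !mulr0 !addr0.
  move=> i /=.
  have -> : theta (sigma i) ^+ 2 * cc i ^+ 2 = (theta (sigma i) * cc i) ^+ 2.
    by knorm K; ring.
  by rewrite cc_rel; knorm K; ring.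
Qed.

Lemma sQ_Qf p : (forall m, (m < 3)%N -> sQ m p = 0) -> Qf p.
Proof.
move=> hs m hm; rewrite qQ_form.
have hg (k : nat) : forall i, theta (sigma i) ^+ k * cc i ^+ 2 =
    (fun i => theta (sigma i) ^+ k * cc i ^+ 2) i by [].
have e1 i : theta (sigma i) ^+ 1 * cc i ^+ 2 = (theta (sigma i) * cc i) * cc i.
  by knorm K; ring.
have e2 i : theta (sigma i) ^+ 2 * cc i ^+ 2 = (theta (sigma i) * cc i) ^+ 2.
  by knorm K; ring.
apply/eqP; rewrite -(mulIr_eq0 _ (mulIf (expf_neq0 2 dN_nz))); apply/eqP.
rewrite mulr_suml.
have fin a b d : (forall i, theta i ^+ m * dN ^+ 2 = a * (theta (sigma i) ^+ 0 * cc i ^+ 2)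
     + b * (theta (sigma i) ^+ 1 * cc i ^+ 2) + d * (theta (sigma i) ^+ 2 * cc i ^+ 2)) ->
   \sum_i omega theta i * p 0 i ^+ 2 * theta i ^+ m * dN ^+ 2 = 0.
  move=> h.
  under eq_bigr do rewrite -mulrA.
  rewrite (@lin3 _ (fun i => theta i ^+ m * dN ^+ 2) (fun i => theta (sigma i) ^+ 0 * cc i ^+ 2)
    (fun i => theta (sigma i) ^+ 1 * cc i ^+ 2) (fun i => theta (sigma i) ^+ 2 * cc i ^+ 2) a b d h).
  by rewrite -!/(sQ _ p) !hs // !mulr0 !addr0.
case: m hm fin => [|[|[|]]] // _ fin.
- apply: (fin (N 0 0 ^+ 2) ((1 + 1) * N 0 1 * N 0 0) (N 0 1 ^+ 2)) => i.
  rewrite e1 e2 cc_rel /cc /dN; knorm K; ring.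
- apply: (fin (N 1 0 * N 0 0) (N 1 1 * N 0 0 + N 1 0 * N 0 1) (N 1 1 * N 0 1)) => i.
  rewrite e1 e2 cc_rel /cc /dN; knorm K; ring.
- apply: (fin (N 1 0 ^+ 2) ((1 + 1) * N 1 1 * N 1 0) (N 1 1 ^+ 2)) => i.
  rewrite e1 e2 cc_rel /cc /dN; knorm K; ring.
Qed.

Lemma Qf_T0 p : Qf (p *m T0) <-> Qf p.
Proof.
have c0 : Cc / dN ^+ 3 != 0 by rewrite mulf_neq0 ?Cc_nz ?invr_neq0 ?expf_neq0 ?dN_nz.
split.
- move=> hq; apply: sQ_Qf => m hm; have := hq m hm; rewrite QT0 => /eqP.
  by rewrite mulf_eq0 (negbTE c0) /= => /eqP.
- by move=> hp m hm; rewrite QT0 Qf_sQ // mulr0.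
Qed.

Lemma embD_T0 u : embD u *m Phi *m T0 = embD (u *m N) *m Phi.
Proof.
apply/rowP => j; rewrite -(permKV sigma j) T0_entry !embD_Phi !rowN.
set i := (sigma^-1)%g j.
have hW := omega_neq0 (sigma i); have hw := omega_neq0 i; have hc := cc_nz i.
transitivity ((u 0 0 + u 0 1 * theta i) * dN / (cc i * omega theta (sigma i))).
  rewrite /kap; move: hW hw hc => /eqP hW /eqP hw /eqP hc; knorm K; field.
  by repeat split.
symmetry.
transitivity (((u 0 0 * N 0 0 + u 0 1 * N 1 0) * cc i +
   (u 0 0 * N 0 1 + u 0 1 * N 1 1) * (theta (sigma i) * cc i)) / (cc i * omega theta (sigma i))).
  move: hW hw hc => /eqP hW /eqP hw /eqP hc; knorm K; field.
  by repeat split.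
rewrite cc_rel; congr (_ * _); rewrite /cc /dN; knorm K; ring.
Qed.

End Basic.

Section Helpers.
Variable K : fieldType.

Lemma rv_unit_nz n (A : 'M[K]_n) (v : 'rV[K]_n) : A \in unitmx -> v != 0 -> v *m A != 0.
Proof.
move=> hA hv; apply/eqP => h; move/eqP: hv; apply.
by rewrite -(mulmxK hA v) h mul0mx.
Qed.

Lemma proj_refl n (x : 'rV[K]_n) : proj_eq x x.
Proof. by exists 1; rewrite ?oner_neq0 ?scale1r. Qed.

Lemma embD_nz (u : 'rV[K]_2) : u != 0 -> embD u != 0.
Proof.
move=> hu; apply/eqP => h; move/eqP: hu; apply; apply/rowP => k.
have := congr1 (fun M : 'rV[K]_6 => M 0 (widen_ord (isT : (2 <= 6)%N) k)) h.
rewrite !mxE /= ltn_ord => <-; congr (u 0 _); apply/val_inj; by rewrite /= inordK.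
Qed.

Lemma embD_Delta (u : 'rV[K]_2) : u != 0 -> inDelta0 (embD u).
Proof.
move=> hu; split; first exact: embD_nz.
by move=> j hj; rewrite mxE ltnNge hj.
Qed.

Lemma Delta_embD (v : 'rV[K]_6) : inDelta0 v -> exists2 u : 'rV[K]_2, u != 0 & v = embD u.
Proof.
move=> [hv h2].
have e : v = embD (\row_(k < 2) v 0 (inord k)).
  apply/rowP => j; rewrite !mxE; case: ifP => hj.
    by rewrite inordK // inord_val.
  by rewrite h2 // leqNgt hj.
exists (\row_(k < 2) v 0 (inord k)) => //.
by apply/eqP => h0; move/eqP: hv; apply; rewrite e h0; apply/rowP => j; rewrite !mxE; case: ifP.
Qed.

End Helpers.

Theorem mainTheorem12
  (K : closedFieldType) (char_not2 : (2%:R : K) != 0)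
  (F : {poly K}) (sizeF : size F = 7%N)
  (theta : 'I_6 -> K) (theta_inj : injective theta)
  (theta_roots : forall i, root F (theta i))
  (sigma : 'S_6) (N : 'M[K]_2) (N_unit : N \in unitmx)
  (hB : forall i : 'I_6, proj_eq (ptD theta i *m N) (ptD theta (sigma i))) :
  (exists M : 'M[K]_6, inGL0_S theta M /\ restricts_to M N) /\
  (forall M1 M2 : 'M[K]_6,
     inGL0_S theta M1 -> restricts_to M1 N ->
     inGL0_S theta M2 -> restricts_to M2 N ->
     forall v, inS theta v -> proj_eq (v *m M1) (v *m M2)).
Proof.
have hPhi := @Phi_unit _ _ theta_inj.
have hT0 := @T0_unit _ _ theta_inj _ _ hB.
split.
  pose M := Phi K theta *m T0 K theta sigma N *m invmx (Phi K theta).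
  have hM v : v *m M *m Phi K theta = v *m Phi K theta *m T0 K theta sigma N.
    by rewrite /M !mulmxA mulmxKV.
  have hMD u : embD u *m M = embD (u *m N).
    by rewrite /M !mulmxA (@embD_T0 _ _ theta_inj _ _ hB) mulmxK.
  have Munit : M \in unitmx by rewrite /M !unitmx_mul hPhi hT0 unitmx_inv hPhi.
  exists M; split; last by move=> u hu; rewrite hMD; apply: proj_refl.
  split; [split; [done | split] | split].
  - move=> v /inS_Phi [hv hq]; apply/inS_Phi; split; first exact: rv_unit_nz.
    by rewrite hM (@Qf_T0 _ _ theta_inj _ _ hB).
  - move=> w /inS_Phi [hw hq]; exists (w *m invmx M); last first.
      by rewrite mulmxKV //; apply: proj_refl.
    apply/inS_Phi; split; first by apply: rv_unit_nz; rewrite ?unitmx_inv.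
    by rewrite -(@Qf_T0 _ _ theta_inj _ _ hB) -hM mulmxKV.
  - move=> v /Delta_embD [u hu ->]; rewrite hMD; apply: embD_Delta.
    exact: rv_unit_nz.
  - move=> w /Delta_embD [u hu ->]; exists (embD (u *m invmx N)); last first.
      by rewrite hMD mulmxKV //; apply: proj_refl.
    by apply: embD_Delta; apply: rv_unit_nz; rewrite ?unitmx_inv.
move=> M1 M2 [[hU1 [hS1 _]] _] hR1 [[hU2 [_ hS2]] _] hR2 v hv.
pose T := invmx (Phi K theta) *m M1 *m invmx M2 *m Phi K theta.
have two_nz : (1 + 1 : K) != 0 by rewrite -mulr2n.
have hTp p : p *m T = p *m invmx (Phi K theta) *m M1 *m invmx M2 *m Phi K theta.
  by rewrite /T !mulmxA.
have hTu : T \in unitmx.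
  by rewrite /T !unitmx_mul !unitmx_inv hPhi hU1 hU2.
have [l l0 hl] : exists2 l : K, l != 0 & T = l%:M.
  apply: (@uniq_core _ _ theta_inj _ two_nz hTu).
  - move=> p hp hq.
    have hv' : inS theta (p *m invmx (Phi K theta)).
      apply/inS_Phi; rewrite mulmxKV //; split=> //.
      by apply: rv_unit_nz; rewrite ?unitmx_inv.
    have [w hw [k k0 hk]] := hS2 _ (hS1 _ hv').
    have e : p *m invmx (Phi K theta) *m M1 = k^-1 *: (w *m M2).
      by rewrite hk scalerA mulVf // scale1r.
    rewrite hTp e -scalemxAl mulmxK // -scalemxAl; apply: Qf_scale.
    by case/inS_Phi: hw.
  - move=> u hu.
    have [a a0 ha] := hR1 u hu; have [b b0 hb] := hR2 u hu.
    exists (a / b); first by rewrite mulf_neq0 ?invr_neq0.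
    rewrite hTp mulmxK // ha.
    have -> : embD (u *m N) = b^-1 *: (embD u *m M2) by rewrite hb scalerA mulVf // scale1r.
    by rewrite -!scalemxAl mulmxK // scalerA.
have e : M1 = l *: M2.
  have : invmx (Phi K theta) *m M1 *m invmx M2 *m Phi K theta = l%:M by [].
  move/(congr1 (fun X => Phi K theta *m X *m invmx (Phi K theta))).
  rewrite !mulmxA mulmxV // mul1mx mulmxK // -scalemx1 -scalemxAr mulmx1 -scalemxAl mulmxV //.
  by move/(congr1 (fun X => X *m M2)); rewrite mulmxKV // -scalemxAl mul1mx.
exists l => //; by rewrite e scalemxAr.
Qed.
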